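(* Let $\mathcal F$ be a filtration array and $E=(E_{m,n})_{m,n\in\mathbb N}$ a nonnegative process adapted to $\mathcal F$. If $E$ is an asymptotic supermartingale (in $L_1$, for $\mathcal F$, uniformly in $\mathcal P$), then $E$ has the asymptotic supermartingale property (in $L_1$, for $\mathcal F$, uniformly in $\mathcal P$).
   Context: $(\Omega,\mathcal A)$ is a measurable space and $\mathcal P$ a set of probability measures on it; $\mathbb N=\{0,1,\dots\}$. A filtration array is a family $(\mathcal F_{m,n})_{m,n\in\mathbb N}$ of sub-$\sigma$-algebras of $\mathcal A$ with $\mathcal F_{m,n}\subset\mathcal F_{m+1,n}\cap\mathcal F_{m,n+1}$; $\mathcal F_{\infty,n}:=\sigma(\bigcup_m\mathcal F_{m,n})$. Adapted means $E_{m,n}$ is $\mathcal F_{m,n}$-measurable. A supermartingale for $\mathcal P$ w.r.t. a filtration $\mathcal G$ is a $\mathcal G$-adapted process $(S_n)$ with each $S_n$ $P$-integrable and $\mathbb E_P[S_{n+1}\mid\mathcal G_n]\le S_n$ $P$-a.s. for all $P\in\mathcal P$, $n\in\mathbb N$. $E$ converges to $S$ in $L_1$ uniformly in $\mathcal P$ if all $E_{m,n},S_n$ are $P$-integrable for all $P\in\mathcal P$ and $\lim_m\sup_{P\in\mathcal P}\mathbb E_P[|E_{m,n}-S_n|]=0$ for every $n$. $E$ is an asymptotic supermartingale if there is a nonnegative supermartingale $S$ for $\mathcal P$ w.r.t. $\mathcal F_{\infty,\bullet}$ such that $E$ converges to $S$ in $L_1$ uniformly in $\mathcal P$. For $P\in\mathcal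 P$ and $m,n\in\mathbb N$ let $\delta_{m,n}=\mathbb E_P[E_{m,n+1}\mid\mathcal F_{m,n}]-E_{m,n}$ if $E_{m,n+1}$ is $P$-integrable and $\delta_{m,n}=\infty$ otherwise (dependence on $P$ suppressed). $E$ has the asymptotic supermartingale property (ASP) if for every $n\in\mathbb N$, $\lim_{m\to\infty}\sup_{P\in\mathcal P}\mathbb E_P[\delta_{m,n}^+]=0$, where $x^+=\max\{x,0\}$. *)

(* Defs.v *)
From HB Require Import structures.
From mathcomp Require Import all_boot all_order all_algebra.
From mathcomp Require Import all_classical all_reals all_analysis.
Set Implicit Arguments. Unset Strict Implicit. Unset Printing Implicit Defensive.
Import Order.TTheory GRing.Theory Num.Theory numFieldNormedType.Exports.
Local Open Scope classical_set_scope.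
Local Open Scope ring_scope.

Section Defs.
Context {d : measure_display} {T : measurableType d} {R : realType}.

Definition sub_sigma (G : set (set T)) : Prop :=
  sigma_algebra setT G /\ G `<=` measurable.

Definition G_measurable (G : set (set T)) (X : T -> R) : Prop :=
  forall B : set R, measurable B -> G (X @^-1` B).

Definition cond_exp_version (P : probability T R) (G : set (set T))
    (X Y : T -> R) : Prop :=
  G_measurable G Y /\ P.-integrable setT (EFin \o Y) /\
  forall A, G A -> (\int[P]_(x in A) (Y x)%:E = \int[P]_(x in A) (X x)%:E)%E.

Definition filtration_array (F : nat -> nat -> set (set T)) : Prop :=
  (forall m n, sub_sigma (F m n)) /\
  (forall m n, F m n `<=` F m.+1 n /\ F m n `<=` F m n.+1).

Definition F_inf (F : nat -> nat -> set (set T)) (n : nat) : set (set T) :=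
  smallest (sigma_algebra setT) (\bigcup_m F m n).

Definition adapted_array (F : nat -> nat -> set (set T))
    (E : nat -> nat -> T -> R) : Prop :=
  forall m n, G_measurable (F m n) (E m n).

Definition supermartingale (Pset : set (probability T R))
    (G : nat -> set (set T)) (S : nat -> T -> R) : Prop :=
  (forall n, G_measurable (G n) (S n)) /\
  (forall P, Pset P -> forall n, P.-integrable setT (EFin \o S n)) /\
  (forall P, Pset P -> forall n Y, cond_exp_version P (G n) (S n.+1) Y ->
     {ae P, forall x, Y x <= S n x}).

Definition L1_unif_conv (Pset : set (probability T R))
    (E : nat -> nat -> T -> R) (S : nat -> T -> R) : Prop :=
  (forall P, Pset P -> forall m n,
      P.-integrable setT (EFin \o E m n) /\ P.-integrable setT (EFin \o S n)) /\
  forall n, (fun m => ereal_sup ([set 0%E] `|` [set (\int[P]_x (`|E m n x - S n x|)%:E)%E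
                                 | P in Pset])) @ \oo --> 0%E.

Definition asymptotic_supermartingale (Pset : set (probability T R))
    (F : nat -> nat -> set (set T)) (E : nat -> nat -> T -> R) : Prop :=
  exists S : nat -> T -> R,
    (forall n x, 0 <= S n x) /\ supermartingale Pset (F_inf F) S /\
    L1_unif_conv Pset E S.

(* The conditional expectation
   is a.s. unique, so the value does not depend on the chosen version; we
   take the sup over all versions (a singleton value). *)
Definition exp_delta_pos (P : probability T R)
    (F : nat -> nat -> set (set T)) (E : nat -> nat -> T -> R) (m n : nat)
    : \bar R :=
  if `[< P.-integrable setT (EFin \o E m n.+1) >] then
    ereal_sup [set (\int[P]_x (Num.max (Y x - E m n x) 0)%:E)%E
              | Y in cond_exp_version P (F m n) (E m n.+1)]
  else +oo%E.

Definition ASP (Pset : set (probability T R))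
    (F : nat -> nat -> set (set T)) (E : nat -> nat -> T -> R) : Prop :=
  forall n, (fun m => ereal_sup ([set 0%E] `|` [set exp_delta_pos P F E m n | P in Pset]))
              @ \oo --> 0%E.

End Defs.

(* Main.v *)
Require Import Defs.
From HB Require Import structures.
From mathcomp Require Import all_boot all_order all_algebra.
From mathcomp Require Import all_classical all_reals all_analysis.
From mathcomp Require Import measurable_realfun lra.
Import Order.TTheory GRing.Theory Num.Theory numFieldNormedType.Exports.
Local Open Scope classical_set_scope.
Local Open Scope ring_scope.

Section CE.
Context d (T : measurableType d) (R : realType) (G : set (set T)).
Hypothesis sG : sub_sigma G.

Local Notation GT := (g_sigma_algebraType G).

Lemma GT_measE : (measurable : set (set GT)) = G.
Proof. exact: measurable_g_measurableTypeE sG.1. Qed.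

Lemma G_measurableP (f : T -> R) :
  G_measurable G f <-> measurable_fun (setT : set GT) f.
Proof.
split.
- move=> Gf _ B mB; rewrite setTI GT_measE; exact: Gf.
- move=> mf B mB; have := mf measurableT B mB; rewrite setTI GT_measE; exact.
Qed.

Lemma GT_measurable_funT d' (U : measurableType d') (f : T -> U) :
  measurable_fun (setT : set GT) f -> measurable_fun (setT : set T) f.
Proof.
move=> mf _ B mB; have := mf measurableT B mB; rewrite GT_measE => GB.
exact: sG.2.
Qed.

Definition idG : T -> GT := id.

Lemma midG : measurable_fun (setT : set T) idG.
Proof.
move=> _ B; rewrite GT_measE => GB; rewrite setTI; exact: sG.2.
Qed.

HB.instance Definition _ := isMeasurableFun.Build _ _ T GT idG midG.

Lemma midG' (A : set GT) : measurable A -> measurable (idG @^-1` A).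
Proof. by move=> mA; have := @midG measurableT A mA; rewrite setTI. Qed.

Section nuG.
Variables (P : probability T R) (X : T -> R).
Hypothesis intX : P.-integrable setT (EFin \o X).

Definition nuG : set GT -> \bar R := pushforward (induced_charge intX) idG.

Let nuG0 : nuG set0 = 0%E.
Proof. by rewrite /nuG /pushforward preimage_set0 charge0. Qed.

Let nuG_finite A : measurable A -> nuG A \is a fin_num.
Proof.
move=> mA; apply: fin_num_measure.
  exact: midG. exact: mA.
Qed.

Let nuG_sigma_additive : semi_sigma_additive nuG.
Proof.
move=> F mF tF mUF; rewrite /nuG /pushforward preimage_bigcup.
apply: charge_semi_sigma_additive.
- by move=> n; exact: midG'.
- apply/trivIsetP => /= i j _ _ ij; rewrite -preimage_setI.
  by move/trivIsetP : tF => /(_ _ _ _ _ ij) ->//; rewrite preimage_set0.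
- by rewrite -preimage_bigcup; exact: midG'.
Qed.

HB.instance Definition _ := isCharge.Build _ _ _ nuG
  nuG0 nuG_finite nuG_sigma_additive.
End nuG.

Lemma cond_exp_exists (P : probability T R) (X : T -> R) :
  P.-integrable setT (EFin \o X) -> exists Y, cond_exp_version P G X Y.
Proof.
move=> intX.
pose mu := distribution P idG.
pose nu := @nuG P X intX.
have numu : nu `<< mu.
  apply/null_content_dominatesP => A mA muA.
  rewrite /nu /nuG /pushforward /induced_charge.
  apply: null_set_integral => //.
    exact: midG'.
  apply: (measurable_funS measurableT) => //; exact: measurable_int intX.
pose f := Radon_Nikodym nu mu.
have intf : mu.-integrable setT f := Radon_Nikodym_integrable numu.
have mfG := measurable_int _ intf.
have mfT : measurable_fun (setT : set T) f by exact: GT_measurable_funT mfG.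
have finf x : f x \is a fin_num := Radon_Nikodym_fin_num x numu.
have intfT : P.-integrable setT f.
  apply/integrableP; split => //.
  move/integrableP : intf => [_]; rewrite ge0_integral_pushforward //.
  exact: measurableT_comp.
exists (fine \o f); split; [|split].
- apply/G_measurableP; apply: measurableT_comp => //.
- by apply: eq_integrable intfT => // x _ /=; rewrite fineK.
- move=> A GA.
  have mA : measurable A by exact: sG.2.
  have mAG : (measurable : set (set GT)) A by rewrite GT_measE.
  transitivity (\int[P]_(x in A) f x)%E.
    by apply: eq_integral => x _ /=; rewrite fineK.
  transitivity (\int[mu]_(x in A) f x)%E.
    rewrite integral_pushforward //.
    exact: integrableS intfT.
  by rewrite -Radon_Nikodym_integral.
Qed.

End CE.

Arguments GT_measE {d T G}.
Arguments G_measurableP {d T R G}.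
Section Key.
Context d (T : measurableType d) (R : realType) (P : probability T R).
Local Open Scope ereal_scope.

Lemma intS {A : set T} {h : T -> R} : measurable A ->
  P.-integrable setT (EFin \o h) -> P.-integrable A (EFin \o h).
Proof. by move=> mA; apply: integrableS. Qed.

Lemma mh {h : T -> R} : P.-integrable setT (EFin \o h) ->
  measurable_fun setT h.
Proof. by move=> ih; apply/measurable_EFinP; exact: measurable_int ih. Qed.

Lemma intA_le_abs {A : set T} {h : T -> R} : measurable A ->
  P.-integrable setT (EFin \o h) ->
  \int[P]_(x in A) (h x)%:E <= \int[P]_x (`|h x|)%:E.
Proof.
move=> mA ih.
have mh' := mh ih.
have iabs : P.-integrable setT (fun x => (`|h x|)%:E).
  by apply: eq_integrable (integrable_abse ih) => // x _.
apply: (@le_trans _ _ (\int[P]_(x in A) (`|h x|)%:E)).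
  apply: le_integral => //; [exact: intS|exact: integrableS iabs|].
  by move=> x _; rewrite lee_fin ler_norm.
apply: ge0_subset_integral => //.
have hm : measurable_fun setT (fun x => (`|h x|)%R) by exact: measurableT_comp.
by move/measurable_EFinP : hm.
Qed.

Lemma ae_int_le {A : set T} {Z S0 : T -> R} : measurable A ->
  P.-integrable setT (EFin \o Z) -> P.-integrable setT (EFin \o S0) ->
  {ae P, forall x, Z x <= S0 x}%R ->
  \int[P]_(x in A) (Z x)%:E <= \int[P]_(x in A) (S0 x)%:E.
Proof.
move=> mA iZ iS hae.
have fZ := integrable_fin_num mA (intS mA iZ).
have fS := integrable_fin_num mA (intS mA iS).
rewrite -subre_ge0 // -integralB_EFin //; [|exact: intS|exact: intS].
rewrite (ae_eq_integral (fun x => (Num.max (S0 x - Z x) 0)%:E)) //.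
- by apply: integral_ge0 => x _; rewrite lee_fin le_max lexx orbT.
- apply: measurableT_comp => //; apply: measurable_funTS.
  exact: measurable_funB (mh iS) (mh iZ).
- apply: measurableT_comp => //; apply: measurable_funTS.
  apply: measurable_maxr => //.
  exact: measurable_funB (mh iS) (mh iZ).
- apply: filterS hae => x hx _.
  by congr EFin; rewrite max_l // subr_ge0.
Qed.

Lemma key (G G' : set (set T)) (sG : sub_sigma G) (sG' : sub_sigma G')
    (GG' : G `<=` G') (Em Em1 S0 S1 Y Z : T -> R) :
  G_measurable G Em ->
  P.-integrable setT (EFin \o Em) -> P.-integrable setT (EFin \o Em1) ->
  P.-integrable setT (EFin \o S0) -> P.-integrable setT (EFin \o S1) ->
  cond_exp_version P G Em1 Y -> cond_exp_version P G' S1 Z ->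
  {ae P, forall x, Z x <= S0 x}%R ->
  \int[P]_x (Num.max (Y x - Em x) 0)%:E <=
    \int[P]_x (`|Em1 x - S1 x|)%:E + \int[P]_x (`|Em x - S0 x|)%:E.
Proof.
move=> GEm iEm iEm1 iS0 iS1 [GY [iY hY]] [GZ [iZ hZ]] hae.
pose A := [set x | (Em x < Y x)%R].
have GA : G A.
  have mYE : measurable_fun (setT : set (g_sigma_algebraType G))
      (fun x => Y x - Em x)%R.
    by apply: measurable_funB; apply/G_measurableP.
  have := mYE measurableT _ (measurable_itv `]0%R, +oo[).
  rewrite setTI (GT_measE sG).
  suff -> : A = (fun x => Y x - Em x)%R @^-1` `]0%R, +oo[%classic by [].
  by apply/seteqP; split => x /=; rewrite in_itv /= andbT subr_gt0.
have mA : measurable A by exact: sG.2.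
have -> : \int[P]_x (Num.max (Y x - Em x) 0)%:E =
          \int[P]_(x in A) (Y x - Em x)%:E.
  rewrite [RHS]integral_mkcond; apply: eq_integral => x _ /=.
  rewrite /patch /A /=; case: ifPn => [/set_mem hx|].
    by rewrite max_l // subr_ge0 ltW.
  move=> /negP hx; rewrite max_r //; rewrite subr_le0 leNgt; apply/negP => h.
  by apply: hx; rewrite inE.
have eB h1 h2 : P.-integrable setT (EFin \o h1) ->
    P.-integrable setT (EFin \o h2) ->
    \int[P]_(x in A) (h1 x - h2 x)%:E =
    \int[P]_(x in A) (h1 x)%:E - \int[P]_(x in A) (h2 x)%:E.
  move=> i1 i2; rewrite -integralB_EFin //; try exact: intS.
rewrite eB // hY //.
have iB h1 h2 : P.-integrable setT (EFin \o h1) ->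
    P.-integrable setT (EFin \o h2) ->
    P.-integrable setT (EFin \o (fun x => h1 x - h2 x)%R).
  by move=> i1 i2; exact: (integrableB measurableT i1 i2).
have h1 := intA_le_abs mA (iB _ _ iEm1 iS1).
have h2 := intA_le_abs mA (iB _ _ iS0 iEm).
have h3 := ae_int_le mA iZ iS0 hae.
rewrite hZ in h3; last exact: GG'.
rewrite eB // in h1; rewrite eB // in h2.
rewrite (_ : \int[P]_x (`|S0 x - Em x|)%:E = \int[P]_x (`|Em x - S0 x|)%:E) in h2; last first.
  by apply: eq_integral => x _; rewrite distrC.
have fA h : P.-integrable setT (EFin \o h) ->
    \int[P]_(x in A) (h x)%:E \is a fin_num.
  by move=> ih; have := integrable_fin_num mA (intS mA ih).
have fT h : P.-integrable setT (EFin \o h) ->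
    \int[P]_x (`|h x|)%:E \is a fin_num.
  move=> ih.
  have iabs : P.-integrable setT (fun x => (`|h x|)%:E).
    by apply: eq_integrable (integrable_abse ih) => // x _.
  by have := integrable_fin_num measurableT iabs.
move: h1 h2 h3.
rewrite -(fineK (fA _ iEm1)) -(fineK (fA _ iS1)) -(fineK (fA _ iS0)).
rewrite -(fineK (fA _ iEm)) -(fineK (fT _ (iB _ _ iEm1 iS1))).
rewrite -(fineK (fT _ (iB _ _ iEm iS0))).
rewrite -!EFinB -!EFinD !lee_fin => *; lra.
Qed.

End Key.

Arguments cond_exp_exists {d T R G} sG {P X}.
Arguments key {d T R P G G'} sG sG' GG' {Em Em1 S0 S1 Y Z}.

Lemma F_inf_sub d (T : measurableType d) (F : nat -> nat -> set (set T)) n :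
  filtration_array F -> sub_sigma (F_inf F n).
Proof.
move=> [sF _]; split; first exact: smallest_sigma_algebra.
apply: smallest_sub.
  split; [exact: measurable0| |].
  - by move=> A mA; rewrite setTD; exact: measurableC.
  - by move=> A mA; exact: bigcup_measurable.
by move=> A [m _ FA]; exact: (sF m n).2.
Qed.

Arguments F_inf_sub {d T F} n.

Lemma F_sub_inf d (T : measurableType d) (F : nat -> nat -> set (set T)) m n :
  F m n `<=` F_inf F n.
Proof. by move=> A FA; apply: sub_gen_smallest; exists m. Qed.

Theorem mainTheorem6 (d : measure_display) (T : measurableType d)
    (R : realType) (Pset : set (probability T R))
    (F : nat -> nat -> set (set T)) (E : nat -> nat -> T -> R) :
  filtration_array F ->
  adapted_array F E ->
  (forall m n x, 0 <= E m n x) ->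
  asymptotic_supermartingale Pset F E ->
  ASP Pset F E.
Proof.
move=> hF adE E0 [S [S0 [[GS [iS sup]] [iES cv]]]] n.
set a := fun n m => ereal_sup ([set 0%E] `|`
  [set (\int[P]_x (`|E m n x - S n x|)%:E)%E | P in Pset]).
have a0 k m : (0 <= a k m)%E by apply: ereal_sup_ubound; left.
apply: (@squeeze_cvge _ _ _ _ (fun=> 0%E) _ (fun m => a n.+1 m + a n m)%E).
- apply: nearW => m; apply/andP; split.
    by apply: ereal_sup_ubound; left.
  apply: ge_ereal_sup => _ [->|[P HP <-]]; first exact: adde_ge0.
  rewrite /exp_delta_pos asboolT; last exact: (iES P HP m n.+1).1.
  apply: ge_ereal_sup => _ [Y hY <-].
  have [Z hZ] := cond_exp_exists (F_inf_sub n hF) (iS P HP n.+1).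
  have hae := sup P HP n Z hZ.
  apply: (le_trans (key (hF.1 m n) (F_inf_sub n hF) (@F_sub_inf _ _ F m n)
    (adE m n) (iES P HP m n).1 (iES P HP m n.+1).1 (iES P HP m n).2
    (iES P HP m n.+1).2 hY hZ hae)).
  apply: leeD; apply: ereal_sup_ubound; right; by exists P.
- exact: cvg_cst.
- rewrite -[X in _ --> X]adde0; apply: cvgeD => //; [exact: cv|exact: cv].
Qed.
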